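(* Let $\mathcal T$ be an orbital category and $\mathcal C$ a $\mathcal T$-weak indexing system. Then: (1) $\mathcal C$ has one color if and only if $c(\mathcal C)=\mathcal T$; (2) $\mathcal C$ satisfies the condition ''for all $S\sqcup S'\in\mathcal C_V$, $S,S'\in\mathcal C_V$'' if and only if $\upsilon(\mathcal C)=c(\mathcal C)$; (3) $\mathcal C$ is unital if and only if $\upsilon(\mathcal C)=\mathcal T$; (4) $\mathcal C$ is an indexing system if and only if $\upsilon(\mathcal C)\cap\nabla(\mathcal C)=\mathcal T$.
   Context: For a small category $\mathcal T$, $\mathbb F_{\mathcal T}$ is the full subcategory of $\mathrm{Fun}(\mathcal T^{op},\mathrm{Set})$ on finite coproducts of representables; $\mathcal T$ is orbital if $\mathbb F_{\mathcal T}$ has pullbacks. $\mathbb F_V:=\mathbb F_{\mathcal T,/V}$, $*_V$ terminal, $\emptyset_V$ initial, $n\cdot S$ the $n$-fold coproduct; for $U\to V$ in $\mathcal T$, $\mathrm{Res}^V_U$ is pullback and $\mathrm{Ind}^V_U$ postcomposition. A full $\mathcal T$-subcategory $\mathcal C$ assigns isomorphism-closed classes $\mathcal C_V\subseteq\mathrm{Ob}\,\mathbb F_V$ stable under all restrictions. For $S\in\mathbb F_V$ with orbits $U\in\mathrm{Orb}(S)$ and $T_U\in\mathbb F_U$, $\coprod_U^ST_U:=\coprod_U\mathrm{Ind}_U^VT_U$. A $\mathcal T$-weak indexing system is a full $\mathcal T$-subcategory $\mathcal C$ with $\mathcal C_V\neq\emptyset\Rightarrow *_V\in\mathcal C_V$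 and closed under $\coprod^S_U T_U$ for $S\in\mathcal C_V$, $T_U\in\mathcal C_U$. It has one color if $\mathcal C_V\neq\emptyset$ for all $V$; it is unital if it has one color and $S\sqcup S'\in\mathcal C_V$ implies $S,S'\in\mathcal C_V$; it is an indexing system if every $\mathcal C_V$ is closed under finite coproducts in $\mathbb F_V$. $c(\mathcal C)=\{V\mid *_V\in\mathcal C_V\}$, $\upsilon(\mathcal C)=\{V\mid\emptyset_V\in\mathcal C_V\}$, $\nabla(\mathcal C)=\{V\mid 2\cdot *_V\in\mathcal C_V\}$. *)

(* Defs.v *)
From mathcomp Require Import all_boot.
Set Implicit Arguments.
Unset Strict Implicit.
Unset Printing Implicit Defensive.

Record Category := {
  Obj :> Type;
  Hom : Obj -> Obj -> Type;
  cid : forall a, Hom a a;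
  comp : forall a b c, Hom b c -> Hom a b -> Hom a c;
  comp_assoc : forall a b c d (h : Hom c d) (g : Hom b c) (f : Hom a b),
      comp h (comp g f) = comp (comp h g) f;
  comp_id_l : forall a b (f : Hom a b), comp (cid b) f = f;
  comp_id_r : forall a b (f : Hom a b), comp f (cid a) = f
}.
Arguments Hom {c} : rename.
Arguments cid {c} : rename.
Arguments comp {c a b c0} : rename.

Section FT.
Variable T : Category.

(* F_T : finite coproducts of representables in Fun(T^op, Set).        *)
(* An object  coprod_{i in I} y(orb i)  (I a finite type) is recorded   *)
(* by its finite family of orbits.  By Yoneda and since coproducts of   *)
(* presheaves are computed pointwise,                                   *)
(*   Hom(coprod_i y(U_i), coprod_j y(V_j)) = prod_i coprod_j T(U_i,V_j), *)
(* which is the hom-set used below (so this is F_T up to equivalence).  *)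
Record FObj := { idx : finType; orb : idx -> Obj T }.
Arguments orb : clear implicits.

Definition FHom (X Y : FObj) :=
  forall i : idx X, { j : idx Y & Hom (orb X i) (orb Y j) }.

Definition Fid (X : FObj) : FHom X X := fun i => existT _ i (cid _).
Arguments Fid : clear implicits.

Definition Fcomp (X Y Z : FObj) (g : FHom Y Z) (f : FHom X Y) : FHom X Z :=
  fun i => existT _ (projT1 (g (projT1 (f i))))
                    (comp (projT2 (g (projT1 (f i)))) (projT2 (f i))).

Definition Feq (X Y : FObj) (f g : FHom X Y) := forall i, f i = g i.

Definition yo (V : Obj T) : FObj := {| idx := unit; orb := fun _ => V |}.
Definition yoM (U V : Obj T) (phi : Hom U V) : FHom (yo U) (yo V) :=
  fun _ => existT _ tt phi.

Definition is_pullback (P X Y Z : FObj) (p1 : FHom P X) (p2 : FHom P Y)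
  (f : FHom X Z) (g : FHom Y Z) : Prop :=
  Feq (Fcomp f p1) (Fcomp g p2) /\
  forall (Q : FObj) (q1 : FHom Q X) (q2 : FHom Q Y),
    Feq (Fcomp f q1) (Fcomp g q2) ->
    exists u : FHom Q P,
      [/\ Feq (Fcomp p1 u) q1, Feq (Fcomp p2 u) q2 &
          forall u' : FHom Q P, Feq (Fcomp p1 u') q1 -> Feq (Fcomp p2 u') q2 ->
                                Feq u' u].

(* an object of F_V: S in F_T with a structure map S -> y(V), i.e. a    *)
(* morphism orb S i -> V for every orbit i.                              *)
Record Slice (V : Obj T) := { sobj : FObj; sstr : forall i, Hom (orb sobj i) V }.
Arguments sstr {V} _ _.

Definition sstrF V (S : Slice V) : FHom (sobj S) (yo V) :=
  fun i => existT (fun j : idx (yo V) => Hom (orb (sobj S) i) (orb (yo V) j))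
                  tt (sstr S i).
Arguments sstrF {V} S _.

Definition slice_hom V (S S' : Slice V) (f : FHom (sobj S) (sobj S')) :=
  Feq (Fcomp (sstrF S') f) (sstrF S).

Definition slice_iso V (S S' : Slice V) : Prop :=
  exists (f : FHom (sobj S) (sobj S')) (g : FHom (sobj S') (sobj S)),
    [/\ slice_hom f, slice_hom g, Feq (Fcomp g f) (Fid (sobj S)) & Feq (Fcomp f g) (Fid (sobj S'))].

Definition star V : Slice V := {| sobj := yo V; sstr := fun _ => cid V |}.
Definition emptyS V : Slice V :=
  {| sobj := {| idx := void; orb := fun i : void => match i with end |};
     sstr := fun i => match i with end |}.

Definition coprod2 V (S S' : Slice V) : Slice V :=
  {| sobj := {| idx := (idx (sobj S) + idx (sobj S'))%type;
                orb := fun i => match i with inl a => orb (sobj S) a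
                                           | inr b => orb (sobj S') b end |};
     sstr := fun i => match i with inl a => sstr S a | inr b => sstr S' b end |}.

Definition coprodF V (J : finType) (F : J -> Slice V) : Slice V :=
  {| sobj := {| idx := {j : J & idx (sobj (F j))};
                orb := fun k => orb (sobj (F (projT1 k))) (projT2 k) |};
     sstr := fun k => sstr (F (projT1 k)) (projT2 k) |}.

(* coprod^S_U T_U := coprod_U Ind_U^V T_U, for S in F_V and T_U in F_U   *)
(* for every orbit U of S (Ind = postcomposition with U -> V).           *)
Definition coprodInd V (S : Slice V) (Tf : forall i, Slice (orb (sobj S) i))
  : Slice V :=
  {| sobj := {| idx := {i : idx (sobj S) & idx (sobj (Tf i))};
                orb := fun k => orb (sobj (Tf (projT1 k))) (projT2 k) |};
     sstr := fun k => comp (sstr S (projT1 k)) (sstr (Tf (projT1 k)) (projT2 k)) |}.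

Definition orbital : Prop :=
  forall (X Y Z : FObj) (f : FHom X Z) (g : FHom Y Z),
    exists (P : FObj) (p1 : FHom P X) (p2 : FHom P Y), is_pullback p1 p2 f g.

Definition TClass := forall V : Obj T, Slice V -> Prop.

(* full T-subcategory: iso-closed and stable under all restrictions     *)
(* Res^V_U (pullback along y(U) -> y(V), for any choice of pullback).   *)
Definition full_Tsub (C : TClass) : Prop :=
  (forall V (S S' : Slice V), slice_iso S S' -> C V S -> C V S') /\
  (forall U V (phi : Hom U V) (S : Slice V) (P : FObj)
          (p1 : FHom P (sobj S)) (p2 : FHom P (yo U)),
      is_pullback p1 p2 (sstrF S) (yoM phi) ->
      C V S -> C U {| sobj := P; sstr := fun i => projT2 (p2 i) |}).

Definition weak_indexing_system (C : TClass) : Prop :=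
  [/\ full_Tsub C,
      (forall V, (exists S, C V S) -> C V (star V)) &
      (forall V (S : Slice V) (Tf : forall i, Slice (orb (sobj S) i)),
          C V S -> (forall i, C (orb (sobj S) i) (Tf i)) -> C V (coprodInd Tf))].

Definition one_color (C : TClass) : Prop := forall V, exists S, C V S.

Definition summand_closed (C : TClass) : Prop :=
  forall V (S S' : Slice V), C V (coprod2 S S') -> C V S /\ C V S'.

Definition unital (C : TClass) : Prop := one_color C /\ summand_closed C.

Definition indexing_system (C : TClass) : Prop :=
  weak_indexing_system C /\
  forall V (J : finType) (F : J -> Slice V), (forall j, C V (F j)) -> C V (coprodF F).

(* c(C), υ(C), ∇(C) as predicates on objects of T *)
Definition colors (C : TClass) (V : Obj T) : Prop := C V (star V).
Definition upsilon (C : TClass) (V : Obj T) : Prop := C V (emptyS V).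
Definition nabla (C : TClass) (V : Obj T) : Prop := C V (coprod2 (star V) (star V)).

End FT.

(* Main.v *)
Require Import Defs.
From mathcomp Require Import all_boot.
Notation comp := Defs.comp.
Fixpoint finN (n : nat) : finType := match n with 0 => void | n.+1 => option (finN n) end.
Lemma card_finN n : #|finN n| = n.
Proof. elim: n => [|n IH] /=; [exact: card_void | by rewrite card_option IH]. Qed.
Lemma bij_card (A B : finType) : #|A| = #|B| ->
  exists (f : A -> B) (g : B -> A), cancel f g /\ cancel g f.
Proof.
move=> E.
exists (fun a => enum_val (cast_ord E (enum_rank a))).
exists (fun b => enum_val (cast_ord (esym E) (enum_rank b))).
split=> x; rewrite enum_valK -[RHS]enum_rankK; congr enum_val; exact: val_inj.
Qed.

Section S.
Variable T : Category.
Lemma iso_of (V : Obj T) (S S' : Slice V) (f : idx (sobj S) -> idx (sobj S')) (g : idx (sobj S') -> idx (sobj S))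
 (hf : forall i, Hom (orb (f:=sobj S) i) (orb (f:=sobj S') (f i)))
 (hg : forall j, Hom (orb (f:=sobj S') j) (orb (f:=sobj S) (g j))) :
 (forall i, existT (fun j => Hom (orb (f:=sobj S) i) (orb (f:=sobj S) j)) (g (f i)) (comp (hg (f i)) (hf i)) = existT _ i (cid _)) ->
 (forall j, existT (fun i => Hom (orb (f:=sobj S') j) (orb (f:=sobj S') i)) (f (g j)) (comp (hf (g j)) (hg j)) = existT _ j (cid _)) ->
 (forall i, comp (sstr (s:=S') (f i)) (hf i) = sstr (s:=S) i) ->
 (forall j, comp (sstr (s:=S) (g j)) (hg j) = sstr (s:=S') j) -> slice_iso S S'.
Proof.
move=> H1 H2 H3 H4.
exists (fun i => existT _ (f i) (hf i)), (fun j => existT _ (g j) (hg j)).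
split=> i; rewrite /Fcomp /sstrF /=.
- by rewrite H3.
- by rewrite H4.
- exact: H1.
- exact: H2.
Qed.

Definition nS (V : Obj T) (J : finType) : Slice V :=
  {| sobj := {| idx := J; orb := fun _ => V |}; sstr := fun _ => cid V |}.

Lemma iso_nS V (J K : finType) : #|J| = #|K| -> slice_iso (nS V J) (nS V K).
Proof.
case/bij_card=> f [g [fK gK]].
apply: (@iso_of V (nS V J) (nS V K) f g (fun _ => cid V) (fun _ => cid V)) => /= [i|j|i|j].
- by rewrite comp_id_l fK.
- by rewrite comp_id_l gK.
- exact: comp_id_l.
- exact: comp_id_l.
Qed.
Lemma iso_sym (V : Obj T) (S S' : Slice V) : slice_iso S S' -> slice_iso S' S.
Proof. by case=> f [g [h1 h2 h3 h4]]; exists g, f; split. Qed.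

Lemma iso_a (V : Obj T) : slice_iso (star V) (coprod2 (star V) (emptyS V)).
Proof.
unshelve refine (@iso_of V (star V) (coprod2 (star V) (emptyS V)) (fun _ => inl tt) (fun _ => tt) (fun _ => cid V) _ _ _ _ _).
- by case=> [u|[]]; exact: cid V.
- by case=> /=; rewrite comp_id_l.
- by case=> [[]|[]] /=; rewrite comp_id_l.
- by case=> /=; rewrite comp_id_l.
- by case=> [[]|[]] /=; rewrite comp_id_l.
Qed.
Definition TfS (V : Obj T) (S S' : Slice V) :
  forall i, Slice (orb (f:=sobj (coprod2 S S')) i) :=
  fun i => match i as i0 return Slice (orb (f:=sobj (coprod2 S S')) i0) with
           | inl a => star (orb (f:=sobj S) a) | inr b => emptyS _ end.

Lemma iso_b (V : Obj T) (S S' : Slice V) : slice_iso (coprodInd (TfS V S S')) S.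
Proof.
unshelve refine (@iso_of V (coprodInd (TfS V S S')) S _ (fun a => existT _ (inl a) tt) _ (fun _ => cid _) _ _ _ _).
- by case=> [[a|b] t] //=; case: t.
- by case=> [[a|b] t] //=; case: t; exact: cid _.
- by case=> [[a|b] t] //=; case: t; rewrite /= comp_id_l.
- by move=> a /=; rewrite comp_id_l.
- case=> [[a|b] t]; case: t => /=; by rewrite !comp_id_r.
- by move=> a; rewrite /= !comp_id_r.
Qed.

Lemma iso_c (V : Obj T) (F : void -> Slice V) : slice_iso (coprodF F) (emptyS V).
Proof.
unshelve refine (@iso_of V (coprodF F) (emptyS V) _ (fun v => match v with end) _ (fun v => match v with end) _ _ _ _).
- by case=> [[]].
- by case=> [[]].
- by case=> [[]].
- by case.
- by case=> [[]].
- by case.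
Qed.

Lemma iso_d (V : Obj T) : slice_iso (coprodF (fun _ : bool => star V)) (coprod2 (star V) (star V)).
Proof.
unshelve refine (@iso_of V (coprodF (fun _ : bool => star V)) (coprod2 (star V) (star V))
  (fun k => if projT1 k then inl tt else inr tt)
  (fun k => match k with inl _ => existT _ true tt | inr _ => existT _ false tt end) _ _ _ _ _ _).
- by case=> [[] []]; exact: cid V.
- by case=> [[]|[]]; exact: cid V.
- by case=> [[] []] /=; rewrite comp_id_l.
- by case=> [[]|[]] /=; rewrite comp_id_l.
- by case=> [[] []] /=; rewrite comp_id_l.
- by case=> [[]|[]] /=; rewrite comp_id_l.
Qed.
Definition TfN (V : Obj T) (K : finType) :
  forall i, Slice (orb (f:=sobj (coprod2 (star V) (star V))) i) :=
  fun i => match i as i0 return Slice (orb (f:=sobj (coprod2 (star V) (star V))) i0) with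
           | inl a => star V | inr b => nS V K end.

Lemma iso_e (V : Obj T) (K : finType) : slice_iso (coprodInd (TfN V K)) (nS V (option K)).
Proof.
unshelve refine (@iso_of V (coprodInd (TfN V K)) (nS V (option K)) _
  (fun j => match j with None => existT _ (inl tt) tt | Some x => existT _ (inr tt) x end) _ _ _ _ _ _).
- by case=> [[u|u] t]; [exact: None | exact: Some t].
- by case=> [[u|u] t]; exact: cid V.
- by case=> [x|]; exact: cid V.
- by case=> [[[]|[]] t] //=; [case: t|]; rewrite comp_id_l.
- by case=> [x|] /=; rewrite comp_id_l.
- by case=> [[[]|[]] t].
- by case=> [x|] /=; rewrite !comp_id_l.
Qed.

Lemma iso_f (V : Obj T) (J : finType) (F : J -> Slice V) :
  slice_iso (coprodInd (S:=nS V J) F) (coprodF F).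
Proof.
unshelve refine (@iso_of V (coprodInd (S:=nS V J) F) (coprodF F) id id (fun _ => cid _) (fun _ => cid _) _ _ _ _).
- by move=> i /=; rewrite comp_id_l.
- by move=> i /=; rewrite comp_id_l.
- by move=> i /=; rewrite comp_id_l comp_id_r.
- by move=> i /=; rewrite comp_id_l comp_id_r.
Qed.

Lemma iso_g (V : Obj T) : slice_iso (emptyS V) (nS V void).
Proof.
unshelve refine (@iso_of V (emptyS V) (nS V void) id id _ _ _ _ _ _); by case.
Qed.
Lemma iso_swap (V : Obj T) (S S' : Slice V) : slice_iso (coprod2 S S') (coprod2 S' S).
Proof.
unshelve refine (@iso_of V (coprod2 S S') (coprod2 S' S)
  (fun k => match k with inl a => inr a | inr b => inl b end)
  (fun k => match k with inl a => inr a | inr b => inl b end) _ _ _ _ _ _).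
- by case=> [a|b]; exact: cid _.
- by case=> [a|b]; exact: cid _.
- by case=> [a|b] /=; rewrite comp_id_l.
- by case=> [a|b] /=; rewrite comp_id_l.
- by case=> [a|b] /=; rewrite comp_id_r.
- by case=> [a|b] /=; rewrite comp_id_r.
Qed.

Lemma Ciso {C : TClass T} (HC : weak_indexing_system C) {V : Obj T} {S S' : Slice V} :
  slice_iso S S' -> C V S -> C V S'.
Proof. by case: HC => [[H _] _ _]; apply: H. Qed.

Lemma orb_col (HT : orbital T) {C : TClass T} (HC : weak_indexing_system C)
  {V : Obj T} {S : Slice V} : C V S -> forall i, colors C (orb (f:=sobj S) i).
Proof.
move=> CS i.
case: (HT (sobj S) (yo (orb (f:=sobj S) i)) (yo V) (sstrF (S:=S)) (yoM (sstr (s:=S) i)))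
  => P [p1 [p2 Hp]].
case: HC => [[_ H] H2 _].
apply: H2; eexists; exact: (H _ _ _ _ _ _ _ Hp CS).
Qed.

Lemma nS_in {C : TClass T} (HC : weak_indexing_system C) (V : Obj T) :
  upsilon C V -> nabla C V -> forall J, C V (nS V J).
Proof.
move=> Hu Hn.
have Hs : C V (star V) by case: HC => [_ H2 _]; apply: H2; exists (emptyS V).
suff H : forall n, C V (nS V (finN n)).
  move=> J; apply: (Ciso HC (iso_nS V (finN #|J|) J (card_finN #|J|))); exact: H.
elim=> [|n IH].
  exact: (Ciso HC (iso_g V)).
apply: (Ciso HC (iso_e V (finN n))).
case: HC => [_ _ H3]; apply: H3 => //.
by case.
Qed.
End S.
Arguments iso_a {T}.
Arguments iso_b {T}.
Arguments iso_c {T}.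
Arguments iso_d {T}.
Arguments iso_f {T}.
Arguments iso_swap {T}.
Arguments Ciso {T C} HC {V S S'}.
Arguments orb_col {T} HT {C} HC {V S}.
Arguments nS_in {T C} HC V.

Theorem mainTheorem6 (T : Category) (HT : orbital T) (C : TClass T)
  (HC : weak_indexing_system C) :
  [/\ (one_color C <-> forall V : Obj T, colors C V),
      (summand_closed C <-> forall V : Obj T, upsilon C V <-> colors C V),
      (unital C <-> forall V : Obj T, upsilon C V) &
      (indexing_system C <-> forall V : Obj T, upsilon C V /\ nabla C V)].
Proof.
have H2 : forall V, (exists S, C V S) -> C V (star V) by case: HC.
have H3 := HC; case: H3 => [_ _ H3].
have P1 : one_color C <-> forall V : Obj T, colors C V.
  by split=> [H V|H V]; [apply: H2; exact: H | exists (star V); exact: H].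
have P2f : summand_closed C -> forall V : Obj T, upsilon C V <-> colors C V.
  move=> H V; split=> [Hu|Hc].
    by apply: H2; exists (emptyS V).
  by case: (H V _ _ (Ciso HC (iso_a V) Hc)).
have P2b : (forall V : Obj T, upsilon C V <-> colors C V) -> summand_closed C.
  move=> H.
  have key : forall V (S S' : Slice V), C V (coprod2 S S') -> C V S.
    move=> V S S' CS.
    apply: (Ciso HC (iso_b V S S')).
    apply: H3 => // -[a|b] /=.
      exact: (orb_col HT HC CS (inl a)).
    by apply/H; exact: (orb_col HT HC CS (inr b)).
  move=> V S S' CS; split; first exact: key CS.
  exact: key (Ciso HC (iso_swap V S S') CS).
split.
- exact: P1.
- by split; [apply: P2f | apply: P2b].
- split=> [[Hoc Hsc] V|H].
    by apply/(P2f Hsc); exact: (proj1 P1 Hoc V).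
  have Hoc : one_color C by move=> V; exists (emptyS V); exact: H.
  split => //; apply: P2b => V; split=> _; [exact: (proj1 P1 Hoc V) | exact: H].
- split=> [[_ H] V|H].
    have Hu : upsilon C V.
      apply: (Ciso HC (iso_c V (fun v : void => match v with end))).
      by apply: H; case.
    split => //.
    apply: (Ciso HC (iso_d V)); apply: H => _; apply: H2; by exists (emptyS V).
  split => // V J F HF.
  apply: (Ciso HC (iso_f V J F)).
  case: (H V) => Hu Hn.
  apply: H3 => //; exact: nS_in.
Qed.
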